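(* Let $f\in C^\infty(\mathbb{R})$ with $f'(0)=0$, let $u_0\in C^\infty(\mathbb{R})$ be bounded with bounded derivatives, and let $u\in C^\infty((0,\infty)\times\mathbb{R},\mathbb{R})$ be the smooth solution of $u_t=u_{xx}+f'(u)u_x$, $u(0,\cdot)=u_0$. Assume there exists $(t_0,\xi_0)\in(0,\infty)\times\mathbb{R}$ such that $$u(t_0,\xi_0)=0,\quad u_x(t_0,\xi_0)=0,\quad u_{xx}(t_0,\xi_0)=0,\quad u_{xxx}(t_0,\xi_0)\neq0.$$ Then there exist three roots of $u(t,\cdot)$ near $\xi_0$ for $t<t_0$ near $t_0$ and one root near $\xi_0$ for $t>t_0$ near $t_0$. Two of the roots, $\xi_{1,2}(t)$, are not continued for $t>t_0$ and satisfy $$\xi_{1,2}(t)-\xi_0=\pm\sqrt{6(t_0-t)}+\mathcal{O}(t_0-t),\qquad u_x(t,\xi_{1,2}(t))=2u_{xxx}(t_0,\xi_0)(t_0-t)+\mathcal{O}((t_0-t)^{3/2})$$ as $t\to t_0^-$, while the third root $\xi(t)$ is continued for $t>t_0$ and satisfies $$\xi(t)-\xi_0=\frac{u_{tt}(t_0,\xi_0)}{2u_{xxx}(t_0,\xi_0)}(t_0-t)+\mathcal{O}((t_0-t)^2),\qquad u_x(t,\xi(t))=u_{xxx}(t_0,\xi_0)(t-t_0)+\mathcal{O}((t_0-t)^2)$$ as $t\to t_0$. *)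

(* Defs.v *)
From Stdlib Require Import Reals List.
From Coquelicot Require Import Coquelicot.
Open Scope R_scope.

Definition smooth1 (f : R -> R) : Prop :=
  forall (n : nat) (x : R), ex_derive (Derive_n f n) x.

Definition smooth_bounded (g : R -> R) : Prop :=
  smooth1 g /\ forall n : nat, exists M : R, forall x : R, Rabs (Derive_n g n x) <= M.

Definition partial_t (u : R -> R -> R) : R -> R -> R :=
  fun t x => Derive (fun s => u s x) t.
Definition partial_x (u : R -> R -> R) : R -> R -> R :=
  fun t x => Derive (fun y => u t y) x.

(* Iterated partial derivative along a word: true = d/dt, false = d/dx
   (the head of the list is applied last). *)
Fixpoint pderiv (w : list bool) (u : R -> R -> R) : R -> R -> R :=
  match w with
  | nil => u
  | b :: w' => if b then partial_t (pderiv w' u) else partial_x (pderiv w' u)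
  end.

Definition smooth_halfplane (u : R -> R -> R) : Prop :=
  forall (w : list bool) (t x : R), 0 < t ->
    ex_derive (fun s => pderiv w u s x) t /\
    ex_derive (fun y => pderiv w u t y) x /\
    continuous (fun p : R * R => pderiv w u (fst p) (snd p)) (t, x).

(* Main.v *)
Require Import Defs.
From Stdlib Require Import Reals.
From Coquelicot Require Import Coquelicot.
From Stdlib Require Import Lra Psatz ClassicalEpsilon List.
Open Scope R_scope.
Import ListNotations.

Lemma isd_cont (g : R -> R) x l : is_derive g x l -> continuity_pt g x.
Proof.
  intro H. apply continuity_pt_filterlim.
  apply (ex_derive_continuous (K:=R_AbsRing) (V:=R_NormedModule)).
  exists l. exact H.
Qed.

Lemma chain (g g' : R -> R) (c r K : R) (n : nat) :
  0 <= K ->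
  (forall y, Rabs (y - c) < r -> is_derive g y (g' y)) ->
  g c = 0 ->
  (forall y, Rabs (y - c) < r -> Rabs (g' y) <= K * Rabs (y - c) ^ n) ->
  forall y, Rabs (y - c) < r -> Rabs (g y) <= K * Rabs (y - c) ^ (S n).
Proof.
  intros HK Hd Hc Hb y Hy.
  assert (Hin : forall z, Rmin c y <= z <= Rmax c y -> Rabs (z - c) <= Rabs (y - c)).
  { intros z Hz. unfold Rmin, Rmax in Hz.
    destruct (Rle_dec c y); unfold Rabs; repeat destruct Rcase_abs; lra. }
  destruct (MVT_gen g c y g') as [z [Hz Heq]].
  - intros z Hz. apply Hd. specialize (Hin z (conj (Rlt_le _ _ (proj1 Hz)) (Rlt_le _ _ (proj2 Hz)))). lra.
  - intros z Hz. apply isd_cont with (g' z). apply Hd. specialize (Hin z Hz). lra.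
  - rewrite Hc, Rminus_0_r in Heq. rewrite Heq, Rabs_mult.
    simpl. rewrite (Rmult_comm (Rabs (y - c))), <- Rmult_assoc.
    apply Rmult_le_compat_r. apply Rabs_pos.
    apply Rle_trans with (K * Rabs (z - c) ^ n).
    + apply Hb. specialize (Hin z Hz). lra.
    + apply Rmult_le_compat_l; auto. apply pow_incr. split. apply Rabs_pos. auto.
Qed.

Lemma isd_sub (f p : R->R) x l dp : is_derive f x l -> is_derive p x dp -> is_derive (fun s => f s - p s) x (l - dp).
Proof. intros. now apply (is_derive_minus f p). Qed.

Lemma isd_subc (f : R->R) x l c : is_derive f x l -> is_derive (fun s => f s - c) x l.
Proof. intros H. replace l with (l - 0) by ring. apply (isd_sub f (fun _ => c)); auto.
  exact (is_derive_const (K:=R_AbsRing) (V:=R_NormedModule) c x). Qed.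

Definition Hyp (D : list bool -> R -> R -> R) (t0 xi0 rho M a b : R) : Prop :=
  0 < rho /\ rho <= t0 /\ 0 < a /\ 0 <= M /\
  (forall w t x, Rabs (t - t0) < rho -> is_derive (fun y => D w t y) x (D (false :: w) t x)) /\
  (forall w t x, Rabs (t - t0) < rho -> is_derive (fun s => D w s x) t (D (true :: w) t x)) /\
  (forall t x, Rabs (t - t0) < rho -> Rabs (x - xi0) < rho ->
     Rabs (D [false;false;false;false] t x) <= M /\ Rabs (D [false;false;false] t x) <= M /\
     a/2 <= D [false;false;false] t x /\
     Rabs (D [true;true;true] t x) <= M /\ Rabs (D [true;true;false] t x) <= M /\
     Rabs (D [true;false;false] t x) <= M /\ Rabs (D [true;false;false;false] t x) <= M) /\
  D [] t0 xi0 = 0 /\ D [false] t0 xi0 = 0 /\ D [false;false] t0 xi0 = 0 /\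
  D [false;false;false] t0 xi0 = a /\ D [true] t0 xi0 = 0 /\ D [true;true] t0 xi0 = b /\
  D [true;false] t0 xi0 = a.

Lemma expand_t D t0 xi0 rho M a b : Hyp D t0 xi0 rho M a b ->
  forall t, Rabs (t - t0) < rho ->
  Rabs (D [] t xi0 - b*(t-t0)^2/2) <= M * Rabs (t-t0) ^3 /\
  Rabs (D [false] t xi0 - a*(t-t0)) <= M * Rabs (t-t0) ^2 /\
  Rabs (D [false;false] t xi0) <= M * Rabs (t-t0) ^1 /\
  Rabs (D [false;false;false] t xi0 - a) <= M * Rabs (t-t0) ^1.
Proof.
  intros (Hr & Hrt & Ha & HM & HDx & HDt & Hb & H0 & H1 & H2 & H3 & Ht1 & Ht2 & Htx).
  assert (Hx0 : Rabs (xi0 - xi0) < rho) by (rewrite Rminus_eq_0, Rabs_R0; lra).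
  assert (S3 : forall y, Rabs (y - t0) < rho -> Rabs (D [true;true] y xi0 - b) <= M * Rabs (y - t0)^1).
  { apply (chain (fun s => D [true;true] s xi0 - b) (fun s => D [true;true;true] s xi0) t0 rho M 0); auto.
    - intros y Hy. apply (isd_subc (fun s => D [true;true] s xi0)). now apply HDt.
    - cbv beta; rewrite Ht2; field.
    - intros y Hy. simpl. rewrite Rmult_1_r. apply (Hb y xi0 Hy Hx0). }
  assert (S2 : forall y, Rabs (y - t0) < rho -> Rabs (D [true] y xi0 - b*(y-t0)) <= M * Rabs (y - t0)^2).
  { apply (chain (fun s => D [true] s xi0 - b*(s-t0)) (fun s => D [true;true] s xi0 - b) t0 rho M 1); auto.
    - intros y Hy. apply (isd_sub (fun s => D [true] s xi0) (fun s => b*(s-t0))). now apply HDt.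
      auto_derive; auto. simpl; ring.
    - cbv beta; rewrite Ht1; field. }
  assert (S1 : forall y, Rabs (y - t0) < rho -> Rabs (D [] y xi0 - b*(y-t0)^2/2) <= M * Rabs (y - t0)^3).
  { apply (chain (fun s => D [] s xi0 - b*(s-t0)^2/2) (fun s => D [true] s xi0 - b*(s-t0)) t0 rho M 2); auto.
    - intros y Hy. apply (isd_sub (fun s => D [] s xi0) (fun s => b*(s-t0)^2/2)). now apply HDt.
      auto_derive; auto. simpl; field.
    - cbv beta; rewrite H0; field. }
  assert (Q2 : forall y, Rabs (y - t0) < rho -> Rabs (D [true;false] y xi0 - a) <= M * Rabs (y - t0)^1).
  { apply (chain (fun s => D [true;false] s xi0 - a) (fun s => D [true;true;false] s xi0) t0 rho M 0); auto.
    - intros y Hy. apply (isd_subc (fun s => D [true;false] s xi0)). now apply HDt.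
    - cbv beta; rewrite Htx; field.
    - intros y Hy. simpl. rewrite Rmult_1_r. apply (Hb y xi0 Hy Hx0). }
  assert (Q1 : forall y, Rabs (y - t0) < rho -> Rabs (D [false] y xi0 - a*(y-t0)) <= M * Rabs (y - t0)^2).
  { apply (chain (fun s => D [false] s xi0 - a*(s-t0)) (fun s => D [true;false] s xi0 - a) t0 rho M 1); auto.
    - intros y Hy. apply (isd_sub (fun s => D [false] s xi0) (fun s => a*(s-t0))). now apply HDt.
      auto_derive; auto. simpl; ring.
    - cbv beta; rewrite H1; field. }
  assert (P2 : forall y, Rabs (y - t0) < rho -> Rabs (D [false;false] y xi0 - 0) <= M * Rabs (y - t0)^1).
  { apply (chain (fun s => D [false;false] s xi0 - 0) (fun s => D [true;false;false] s xi0) t0 rho M 0); auto.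
    - intros y Hy. apply (isd_subc (fun s => D [false;false] s xi0)). now apply HDt.
    - cbv beta; rewrite H2; field.
    - intros y Hy. simpl. rewrite Rmult_1_r. apply (Hb y xi0 Hy Hx0). }
  assert (P3 : forall y, Rabs (y - t0) < rho -> Rabs (D [false;false;false] y xi0 - a) <= M * Rabs (y - t0)^1).
  { apply (chain (fun s => D [false;false;false] s xi0 - a) (fun s => D [true;false;false;false] s xi0) t0 rho M 0); auto.
    - intros y Hy. apply (isd_subc (fun s => D [false;false;false] s xi0)). now apply HDt.
    - cbv beta; rewrite H3; field.
    - intros y Hy. simpl. rewrite Rmult_1_r. apply (Hb y xi0 Hy Hx0). }
  intros t Ht. split; [|split; [|split]]; auto.
  specialize (P2 t Ht). rewrite Rminus_0_r in P2. exact P2.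
Qed.

Lemma expand_x D t0 xi0 rho M a b : Hyp D t0 xi0 rho M a b ->
  forall t x, Rabs (t - t0) < rho -> Rabs (x - xi0) < rho ->
  Rabs (D [] t x - (D [] t xi0 + D [false] t xi0 * (x-xi0) + D [false;false] t xi0 * (x-xi0)^2/2
          + D [false;false;false] t xi0 * (x-xi0)^3/6)) <= M * Rabs (x-xi0)^4 /\
  Rabs (D [false] t x - (D [false] t xi0 + D [false;false] t xi0 * (x-xi0)
          + D [false;false;false] t xi0 * (x-xi0)^2/2)) <= M * Rabs (x-xi0)^3 /\
  Rabs (D [false] t x - (D [false] t xi0 + D [false;false] t xi0 * (x-xi0))) <= M * Rabs (x-xi0)^2.
Proof.
  intros (Hr & Hrt & Ha & HM & HDx & HDt & Hb & _) t x Ht Hx.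
  assert (S3 : forall y, Rabs (y - xi0) < rho -> Rabs (D [false;false;false] t y - D [false;false;false] t xi0) <= M * Rabs (y - xi0)^1).
  { apply (chain (fun s => D [false;false;false] t s - D [false;false;false] t xi0) (fun s => D [false;false;false;false] t s) xi0 rho M 0); auto.
    - intros y Hy. apply (isd_subc (fun s => D [false;false;false] t s)). now apply HDx.
    - cbv beta; ring.
    - intros y Hy. simpl. rewrite Rmult_1_r. apply (Hb t y Ht Hy). }
  assert (S2 : forall y, Rabs (y - xi0) < rho -> Rabs (D [false;false] t y - (D [false;false] t xi0 + D [false;false;false] t xi0 * (y - xi0))) <= M * Rabs (y - xi0)^2).
  { apply (chain _ (fun s => D [false;false;false] t s - D [false;false;false] t xi0) xi0 rho M 1); auto.
    - intros y Hy. apply (isd_sub (fun s => D [false;false] t s)). now apply HDx.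
      auto_derive; auto. simpl; ring.
    - cbv beta; ring. }
  assert (S1 : forall y, Rabs (y - xi0) < rho -> Rabs (D [false] t y - (D [false] t xi0 + D [false;false] t xi0 * (y - xi0) + D [false;false;false] t xi0 * (y - xi0)^2/2)) <= M * Rabs (y - xi0)^3).
  { apply (chain _ (fun s => D [false;false] t s - (D [false;false] t xi0 + D [false;false;false] t xi0 * (s - xi0))) xi0 rho M 2); auto.
    - intros y Hy. apply (isd_sub (fun s => D [false] t s)). now apply HDx.
      auto_derive; auto. simpl; field.
    - cbv beta; field. }
  assert (S0 : forall y, Rabs (y - xi0) < rho -> Rabs (D [] t y - (D [] t xi0 + D [false] t xi0 * (y-xi0) + D [false;false] t xi0 * (y-xi0)^2/2
          + D [false;false;false] t xi0 * (y-xi0)^3/6)) <= M * Rabs (y - xi0)^4).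
  { apply (chain _ (fun s => D [false] t s - (D [false] t xi0 + D [false;false] t xi0 * (s - xi0) + D [false;false;false] t xi0 * (s - xi0)^2/2)) xi0 rho M 3); auto.
    - intros y Hy. apply (isd_sub (fun s => D [] t s)). now apply HDx.
      auto_derive; auto. simpl; field.
    - cbv beta; field. }
  assert (K2 : forall y, Rabs (y - xi0) < rho -> Rabs (D [false;false] t y - D [false;false] t xi0) <= M * Rabs (y - xi0)^1).
  { apply (chain (fun s => D [false;false] t s - D [false;false] t xi0) (fun s => D [false;false;false] t s) xi0 rho M 0); auto.
    - intros y Hy. apply (isd_subc (fun s => D [false;false] t s)). now apply HDx.
    - cbv beta; ring.
    - intros y Hy. simpl. rewrite Rmult_1_r. apply (Hb t y Ht Hy). }
  assert (K1 : forall y, Rabs (y - xi0) < rho -> Rabs (D [false] t y - (D [false] t xi0 + D [false;false] t xi0 * (y - xi0))) <= M * Rabs (y - xi0)^2).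
  { apply (chain _ (fun s => D [false;false] t s - D [false;false] t xi0) xi0 rho M 1); auto.
    - intros y Hy. apply (isd_sub (fun s => D [false] t s)). now apply HDx.
      auto_derive; auto. simpl; ring.
    - cbv beta; ring. }
  auto.
Qed.

Lemma rolle' (g g' : R -> R) p q : p < q ->
  (forall y, p <= y <= q -> is_derive g y (g' y)) -> g p = g q ->
  exists z, p < z < q /\ g' z = 0.
Proof.
  intros Hpq Hd Heq.
  assert (pr : forall x, p < x < q -> derivable_pt g x).
  { intros x Hx. exists (g' x). apply is_derive_Reals. apply Hd. lra. }
  destruct (Rolle g p q pr) as [c [P Hc]]; auto.
  - intros x Hx. apply isd_cont with (g' x). apply Hd. lra.
  - exists c. split; auto. rewrite <- Hc. symmetry. apply derive_pt_eq_0.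
    apply is_derive_Reals. apply Hd. lra.
Qed.

Lemma cont_box (g : R -> R -> R) t0 x0 :
  continuous (fun p : R * R => g (fst p) (snd p)) (t0, x0) ->
  forall eps, 0 < eps -> exists e, 0 < e /\ forall t x, Rabs (t - t0) < e -> Rabs (x - x0) < e ->
    Rabs (g t x - g t0 x0) < eps.
Proof.
  intros H eps Heps.
  assert (H2 : continuity_2d_pt g t0 x0) by (apply continuity_2d_pt_filterlim; exact H).
  destruct (H2 (mkposreal eps Heps)) as [d Hd].
  exists d. split. apply cond_pos. intros. apply Hd; auto.
Qed.

Lemma abs_le_elim x b : Rabs x <= b -> -b <= x <= b.
Proof. unfold Rabs; destruct Rcase_abs; intros; lra. Qed.

Lemma tri5 a1 a2 a3 a4 a5 : Rabs (a1+a2+a3+a4+a5) <= Rabs a1 + Rabs a2 + Rabs a3 + Rabs a4 + Rabs a5.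
Proof.
  repeat (eapply Rle_trans; [apply Rabs_triang|]; apply Rplus_le_compat_r).
  lra.
Qed.

Lemma tri4 a1 a2 a3 a4 : Rabs (a1+a2+a3+a4) <= Rabs a1 + Rabs a2 + Rabs a3 + Rabs a4.
Proof.
  repeat (eapply Rle_trans; [apply Rabs_triang|]; apply Rplus_le_compat_r).
  lra.
Qed.

Lemma tri3 a1 a2 a3 : Rabs (a1+a2+a3) <= Rabs a1 + Rabs a2 + Rabs a3.
Proof.
  repeat (eapply Rle_trans; [apply Rabs_triang|]; apply Rplus_le_compat_r).
  lra.
Qed.

Lemma absmul_le d X B : Rabs d <= B -> Rabs (d * X) <= B * Rabs X.
Proof. intros. rewrite Rabs_mult. apply Rmult_le_compat_r; auto. apply Rabs_pos. Qed.

Lemma R_U (M a b tau X U c0 c1 c2 c3 : R) :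
 0 <= M ->
 Rabs (c0 - b*tau^2/2) <= M*Rabs tau^3 ->
 Rabs (c1 - a*tau) <= M*Rabs tau^2 ->
 Rabs c2 <= M*Rabs tau^1 ->
 Rabs (c3 - a) <= M*Rabs tau^1 ->
 Rabs (U - (c0 + c1*X + c2*X^2/2 + c3*X^3/6)) <= M*Rabs X^4 ->
 Rabs (U - (b*tau^2/2 + a*tau*X + a*X^3/6)) <=
   M*(Rabs tau^3 + Rabs tau^2*Rabs X + Rabs tau*Rabs X^2 + Rabs tau*Rabs X^3 + Rabs X^4).
Proof.
  intros HM H0 H1 H2 H3 H4.
  replace (U - (b*tau^2/2 + a*tau*X + a*X^3/6)) with
    ((c0 - b*tau^2/2) + (c1 - a*tau)*X + c2*(X^2/2) + (c3-a)*(X^3/6) + (U - (c0 + c1*X + c2*X^2/2 + c3*X^3/6))) by field.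
  eapply Rle_trans; [apply tri5|].
  apply absmul_le with (X := X) in H1.
  apply absmul_le with (X := X^2/2) in H2.
  apply absmul_le with (X := X^3/6) in H3.
  assert (E2 : Rabs (X^2/2) = Rabs X^2 / 2).
  { unfold Rdiv. rewrite Rabs_mult, Rabs_inv, (Rabs_pos_eq 2) by lra. rewrite RPow_abs. reflexivity. }
  assert (E3 : Rabs (X^3/6) = Rabs X^3 / 6).
  { unfold Rdiv. rewrite Rabs_mult, Rabs_inv, (Rabs_pos_eq 6) by lra. rewrite RPow_abs. reflexivity. }
  rewrite E2 in H2. rewrite E3 in H3. simpl in *.
  assert (0 <= Rabs tau) by apply Rabs_pos. assert (0 <= Rabs X) by apply Rabs_pos.
  assert (0 <= M * (Rabs tau * 1) * (Rabs X * (Rabs X * 1)) ) by (repeat apply Rmult_le_pos; lra).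
  assert (0 <= M * (Rabs tau * 1) * (Rabs X * (Rabs X * (Rabs X * 1)))) by (repeat apply Rmult_le_pos; lra).
  nra.
Qed.

Lemma R_U1 (M a tau X U c1 c2 c3 : R) :
 0 <= M ->
 Rabs (c1 - a*tau) <= M*Rabs tau^2 ->
 Rabs c2 <= M*Rabs tau^1 ->
 Rabs (c3 - a) <= M*Rabs tau^1 ->
 Rabs (U - (c1 + c2*X + c3*X^2/2)) <= M*Rabs X^3 ->
 Rabs (U - (a*tau + a*X^2/2)) <=
   M*(Rabs tau^2 + Rabs tau*Rabs X + Rabs tau*Rabs X^2 + Rabs X^3).
Proof.
  intros HM H1 H2 H3 H4.
  replace (U - (a*tau + a*X^2/2)) with
    ((c1 - a*tau) + c2*X + (c3-a)*(X^2/2) + (U - (c1 + c2*X + c3*X^2/2))) by field.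
  eapply Rle_trans; [apply tri4|].
  apply absmul_le with (X := X) in H2.
  apply absmul_le with (X := X^2/2) in H3.
  assert (E2 : Rabs (X^2/2) = Rabs X^2 / 2).
  { unfold Rdiv. rewrite Rabs_mult, Rabs_inv, (Rabs_pos_eq 2) by lra. rewrite RPow_abs. reflexivity. }
  rewrite E2 in H3. simpl in *.
  assert (0 <= Rabs tau) by apply Rabs_pos. assert (0 <= Rabs X) by apply Rabs_pos.
  assert (0 <= M * (Rabs tau * 1) * (Rabs X * (Rabs X * 1)) ) by (repeat apply Rmult_le_pos; lra).
  nra.
Qed.

Lemma R_U1' (M a tau X U c1 c2 : R) :
 0 <= M ->
 Rabs (c1 - a*tau) <= M*Rabs tau^2 ->
 Rabs c2 <= M*Rabs tau^1 ->
 Rabs (U - (c1 + c2*X)) <= M*Rabs X^2 ->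
 Rabs (U - a*tau) <= M*(Rabs tau^2 + Rabs tau*Rabs X + Rabs X^2).
Proof.
  intros HM H1 H2 H4.
  replace (U - a*tau) with ((c1 - a*tau) + c2*X + (U - (c1 + c2*X))) by field.
  eapply Rle_trans; [apply tri3|].
  apply absmul_le with (X := X) in H2. simpl in *. nra.
Qed.

Lemma pb1 q Y s : 0 < s <= 1 -> 0 <= q <= s^2 -> 0 <= Y <= 4*s ->
  q^3 + q^2*Y + q*Y^2 + q*Y^3 + Y^4 <= 341 * s^4.
Proof.
  intros Hs Hq HY.
  assert (Y^2 <= 16*s^2) by nra.
  assert (Y^3 <= 64*s^3) by nra.
  assert (Y^4 <= 256*s^4) by nra.
  assert (s^2 <= 1) by nra. assert (s^3 <= 1) by nra.
  assert (q^2 <= s^4) by nra.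
  assert (q^3 <= s^4) by nra.
  assert (q^2*Y <= 4*s^4) by nra.
  assert (q*Y^2 <= 16*s^4) by nra.
  assert (q*Y^3 <= 64*s^4) by nra.
  lra.
Qed.

Lemma pb2 q Y P : 0 <= P -> 0 <= q <= 1 -> 0 <= Y <= P*q ->
  q^3 + q^2*Y + q*Y^2 + q*Y^3 + Y^4 <= (1+P+P^2+P^3+P^4) * q^3.
Proof.
  intros HP Hq HY.
  assert (Y^2 <= P^2*q^2) by nra.
  assert (Y^3 <= P^3*q^3) by nra.
  assert (Y^4 <= P^4*q^4) by nra.
  assert (0 <= q^3) by (apply pow_le; lra).
  assert (q^4 <= q^3) by (replace (q^4) with (q^3*q) by ring; nra).
  assert (q^2*Y <= P*q^3) by (assert (0 <= q^2) by nra; replace (P*q^3) with (q^2*(P*q)) by ring; apply Rmult_le_compat_l; lra).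
  assert (q*Y^2 <= P^2*q^3) by nra.
  assert (0 <= Y^3) by (apply pow_le; lra).
  assert (q*Y^3 <= Y^3) by (replace (Y^3) with (1*Y^3) at 2 by ring; apply Rmult_le_compat_r; lra).
  assert (P^4*q^4 <= P^4*q^3) by (apply Rmult_le_compat_l; [apply pow_le; lra| lra]).
  lra.
Qed.

Lemma outer_val a b M s r X tau U : 0 < a -> 0 <= M -> 0 < s <= 1 -> r^2 = 6*s^2 ->
  tau = -(s^2) -> Rabs X <= 4*s ->
  Rabs (U - (b*tau^2/2 + a*tau*X + a*X^3/6)) <=
   M*(Rabs tau^3 + Rabs tau^2*Rabs X + Rabs tau*Rabs X^2 + Rabs tau*Rabs X^3 + Rabs X^4) ->
  Rabs (U - a*X*(X^2-r^2)/6) <= (Rabs b + 341*M) * s^4.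
Proof.
  intros Ha HM Hs Hr Ht HX HU.
  assert (Hq : Rabs tau = s^2) by (rewrite Ht, Rabs_Ropp, Rabs_pos_eq; nra).
  rewrite Hq in HU.
  pose proof (pb1 (s^2) (Rabs X) s Hs (conj (pow2_ge_0 s) (Rle_refl _)) (conj (Rabs_pos X) HX)) as Hpb.
  assert (HB : Rabs (b*tau^2/2) <= Rabs b * s^4).
  { rewrite Ht. unfold Rdiv. rewrite !Rabs_mult, Rabs_inv, (Rabs_pos_eq 2) by lra.
    rewrite (Rabs_pos_eq ((- s^2)^2)) by nra. 
    assert (0 <= Rabs b) by apply Rabs_pos. replace ((- s^2)^2) with (s^4) by ring. nra. }
  replace (U - a*X*(X^2-r^2)/6) with ((U - (b*tau^2/2 + a*tau*X + a*X^3/6)) + b*tau^2/2)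
    by (rewrite Ht; field_simplify; rewrite Hr; field).
  eapply Rle_trans; [apply Rabs_triang|].
  assert (M*((s^2)^3 + (s^2)^2*Rabs X + s^2*Rabs X^2 + s^2*Rabs X^3 + Rabs X^4) <= M*(341*s^4))
    by (apply Rmult_le_compat_l; auto; exact Hpb).
  lra.
Qed.

Lemma mid_val a b M P q tau X U : 0 < a -> 0 <= M -> 0 <= P -> q = Rabs tau -> 0 <= q <= 1 -> Rabs X <= P*q ->
  Rabs (U - (b*tau^2/2 + a*tau*X + a*X^3/6)) <=
   M*(Rabs tau^3 + Rabs tau^2*Rabs X + Rabs tau*Rabs X^2 + Rabs tau*Rabs X^3 + Rabs X^4) ->
  Rabs (U - (b*tau^2/2 + a*tau*X)) <= (a*P^3 + M*(1+P+P^2+P^3+P^4)) * q^3.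
Proof.
  intros Ha HM HP Hq Hq1 HX HU. rewrite <- Hq in HU.
  pose proof (pb2 q (Rabs X) P HP Hq1 (conj (Rabs_pos X) HX)) as Hpb.
  assert (H3 : Rabs (a*X^3/6) <= a*P^3*q^3).
  { unfold Rdiv. rewrite !Rabs_mult, Rabs_inv, (Rabs_pos_eq 6), (Rabs_pos_eq a) by lra.
    rewrite <- RPow_abs. assert (Rabs X ^3 <= (P*q)^3) by (apply pow_incr; split; auto; apply Rabs_pos).
    assert (0 <= Rabs X ^3) by (apply pow_le; apply Rabs_pos).
    replace ((P*q)^3) with (P^3*q^3) in * by ring. nra. }
  replace (U - (b*tau^2/2 + a*tau*X)) with ((U - (b*tau^2/2 + a*tau*X + a*X^3/6)) + a*X^3/6) by field.
  eapply Rle_trans; [apply Rabs_triang|].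
  assert (M*(q^3 + q^2*Rabs X + q*Rabs X^2 + q*Rabs X^3 + Rabs X^4) <= M*((1+P+P^2+P^3+P^4) * q^3))
    by (apply Rmult_le_compat_l; auto).
  lra.
Qed.

Lemma pos_lemma a M tau X U : 0 < a -> 0 <= M -> 0 <= tau -> 8*M*tau <= a -> 8*M^2*tau <= a^2 ->
  8*M*Rabs X <= a ->
  Rabs (U - (a*tau + a*X^2/2)) <= M*(Rabs tau^2 + Rabs tau*Rabs X + Rabs tau*Rabs X^2 + Rabs X^3) ->
  5*a*tau/8 + a*X^2/8 <= U.
Proof.
  intros Ha HM Ht H1 H2 H3 HU. rewrite (Rabs_pos_eq tau) in HU by auto.
  set (Y := Rabs X) in *. assert (HY : 0 <= Y) by apply Rabs_pos.
  assert (HX2 : X^2 = Y^2) by (unfold Y; rewrite pow2_abs; reflexivity).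
  rewrite HX2 in *.
  assert (A1 : M*tau^2 <= a*tau/8) by nra.
  assert (A2 : M*(tau*Y^2) <= a*Y^2/8) by nra.
  assert (A3 : M*Y^3 <= a*Y^2/8) by nra.
  assert (A4 : M*(tau*Y) <= a*Y^2/8 + a*tau/4).
  { assert (0 <= (a*Y - 4*M*tau)^2) by apply pow2_ge_0.
    assert (8*M^2*tau*tau <= a^2*tau) by (apply Rmult_le_compat_r; lra).
    assert (2*M^2*tau^2 <= a^2*tau/4) by lra.
    assert (a * (M*(tau*Y)) <= a*(a*Y^2/8 + a*tau/4)) by nra.
    apply Rmult_le_reg_l with a; auto. }
  apply abs_le_elim in HU. destruct HU. nra.
Qed.

Lemma outer_ux a M K s r k X tau U : 0 < a -> 0 <= M -> 0 <= K -> 0 < s <= 1 -> r^2 = 6*s^2 -> 0 <= r <= 3*s ->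
  tau = -(s^2) -> Rabs k <= K*s^2 -> K*s <= 1 -> (X = r + k \/ X = -r + k) ->
  Rabs (U - (a*tau + a*X^2/2)) <= M*(Rabs tau^2 + Rabs tau*Rabs X + Rabs tau*Rabs X^2 + Rabs X^3) ->
  Rabs (U - 2*a*s^2) <= (85*M + 4*a*K) * (s^2 * s).
Proof.
  intros Ha HM HK Hs Hr Hr3 Ht Hk HKs HX HU.
  assert (Hq : Rabs tau = s^2) by (rewrite Ht, Rabs_Ropp, Rabs_pos_eq; nra).
  rewrite Hq in HU.
  assert (Hk1 : Rabs k <= s) by nra.
  assert (HY : Rabs X <= 4*s).
  { destruct HX as [-> | ->]; eapply Rle_trans; try apply Rabs_triang; rewrite ?Rabs_Ropp, Rabs_pos_eq; lra. }
  set (Y := Rabs X) in *. assert (0 <= Y) by apply Rabs_pos.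
  assert (B1 : (s^2)^2 + s^2*Y + s^2*Y^2 + Y^3 <= 85 * (s^2*s)).
  { assert (Y^2 <= 16*s^2) by nra. assert (Y^3 <= 64*s^3) by nra.
    assert (s^4 <= s^3) by nra. simpl in *. nra. }
  assert (B2 : Rabs (a*tau + a*X^2/2 - 2*a*s^2) <= 4*a*K*(s^2*s)).
  { assert (E : a*tau + a*X^2/2 - 2*a*s^2 = a*k*(X + r - k + k)/2 \/ a*tau + a*X^2/2 - 2*a*s^2 = a*k*(X - r)/2).
    { destruct HX as [-> | ->]; [left|right]; rewrite Ht; field_simplify; rewrite ?Hr; field. }
    assert (HXr : Rabs (X + r) <= 7*s /\ Rabs (X - r) <= 7*s).
    { destruct HX as [-> | ->]; split; unfold Rabs; repeat destruct Rcase_abs; unfold Rabs in Hk1; destruct (Rcase_abs k); lra. }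
    assert (Hks : Rabs k * (7*s) <= K*s^2*(7*s)) by (apply Rmult_le_compat_r; lra).
    destruct E as [E|E]; rewrite E; unfold Rdiv; rewrite !Rabs_mult, Rabs_inv, (Rabs_pos_eq 2), (Rabs_pos_eq a) by lra.
    - replace (X + r - k + k) with (X + r) by ring.
      assert (Rabs k * Rabs (X+r) <= Rabs k * (7*s)) by (apply Rmult_le_compat_l; [apply Rabs_pos|lra]).
      replace (a * Rabs k * Rabs (X+r) * / 2) with (a/2 * (Rabs k * Rabs (X+r))) by field.
      assert (0 <= a*K*(s^2*s)) by (repeat apply Rmult_le_pos; try lra; nra).
      apply Rle_trans with (a/2 * (K*s^2*(7*s))); [apply Rmult_le_compat_l; lra | lra].
    - assert (Rabs k * Rabs (X-r) <= Rabs k * (7*s)) by (apply Rmult_le_compat_l; [apply Rabs_pos|lra]).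
      replace (a * Rabs k * Rabs (X-r) * / 2) with (a/2 * (Rabs k * Rabs (X-r))) by field.
      assert (0 <= a*K*(s^2*s)) by (repeat apply Rmult_le_pos; try lra; nra).
      apply Rle_trans with (a/2 * (K*s^2*(7*s))); [apply Rmult_le_compat_l; lra | lra]. }
  replace (U - 2*a*s^2) with ((U - (a*tau + a*X^2/2)) + (a*tau + a*X^2/2 - 2*a*s^2)) by ring.
  eapply Rle_trans; [apply Rabs_triang|].
  assert (M*((s^2)^2 + s^2*Y + s^2*Y^2 + Y^3) <= M*(85*(s^2*s))) by (apply Rmult_le_compat_l; auto).
  lra.
Qed.

Lemma between_abs c e x1 x4 w : Rabs (x1 - c) < e -> Rabs (x4 - c) < e -> x1 <= w <= x4 -> Rabs (w - c) < e.
Proof. unfold Rabs; repeat destruct Rcase_abs; intros; lra. Qed.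

Lemma main_ge a s A B k : 0<a -> 0<s -> s <= A -> 3*s <= B -> 0 <= k -> a*s^2*k/2 <= a*(A*B*k)/6.
Proof. intros. assert (3*s^2 <= A*B) by nra. assert (0 <= a*k) by nra. nra. Qed.

Lemma main_le a s A B k : 0<a -> 0<s -> s <= A -> 3*s <= B -> k <= 0 -> a*(A*B*k)/6 <= a*s^2*k/2.
Proof. intros. assert (3*s^2 <= A*B) by nra. assert (a*k <= 0) by nra. nra. Qed.

Lemma opp_sign A e1 e2 Z : Rabs e1 < Z -> Rabs e2 < Z -> Rabs A = Z -> (-A + e2) * (A + e1) <= 0.
Proof.
  unfold Rabs; repeat destruct Rcase_abs; intros; nra.
Qed.

Lemma lt_div_mul q c d : 0 < d -> q < c / d -> q * d < c.
Proof. intros Hd H. apply Rmult_lt_compat_r with (r := d) in H; auto.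
  replace (c / d * d) with c in H by (field; lra). exact H. Qed.

Lemma abs_lt_intro y e : -e < y < e -> Rabs y < e.
Proof. unfold Rabs; destruct Rcase_abs; intros; lra. Qed.

Lemma abs_lt_elim y e : Rabs y < e -> -e < y < e.
Proof. unfold Rabs; destruct Rcase_abs; intros; lra. Qed.

Lemma core D t0 xi0 rho M a b : Hyp D t0 xi0 rho M a b ->
  exists (delta eps C : R) (xi1 xi2 xi : R -> R),
    0 < delta /\ delta < t0 /\ 0 < eps /\ 0 <= C /\
    (forall t, t0 - delta < t < t0 -> xi1 t <> xi2 t /\ xi1 t <> xi t /\ xi2 t <> xi t /\
       forall x, (Rabs (x - xi0) < eps /\ D [] t x = 0) <-> (x = xi1 t \/ x = xi2 t \/ x = xi t)) /\
    (forall t, t0 <= t < t0 + delta -> forall x, (Rabs (x - xi0) < eps /\ D [] t x = 0) <-> x = xi t) /\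
    (forall t, t0 - delta < t < t0 ->
       Rabs (xi1 t - xi0 - sqrt (6 * (t0 - t))) <= C * (t0 - t) /\
       Rabs (xi2 t - xi0 + sqrt (6 * (t0 - t))) <= C * (t0 - t) /\
       Rabs (D [false] t (xi1 t) - 2 * a * (t0 - t)) <= C * ((t0 - t) * sqrt (t0 - t)) /\
       Rabs (D [false] t (xi2 t) - 2 * a * (t0 - t)) <= C * ((t0 - t) * sqrt (t0 - t))) /\
    (forall t, Rabs (t - t0) < delta ->
       Rabs (xi t - xi0 - b / (2 * a) * (t0 - t)) <= C * (t0 - t) ^ 2 /\
       Rabs (D [false] t (xi t) - a * (t - t0)) <= C * (t0 - t) ^ 2).
Proof.
  intros H. pose proof (expand_t _ _ _ _ _ _ _ H) as ET. pose proof (expand_x _ _ _ _ _ _ _ H) as EX.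
  destruct H as (Hr & Hrt & Ha & HM & HDx & HDt & Hb & H0 & H1 & H2 & H3 & Ht1 & Ht2 & Htx).
  assert (FU : forall t x, Rabs (t-t0) < rho -> Rabs (x-xi0) < rho ->
    Rabs (D [] t x - (b*(t-t0)^2/2 + a*(t-t0)*(x-xi0) + a*(x-xi0)^3/6)) <=
    M*(Rabs (t-t0)^3 + Rabs (t-t0)^2*Rabs (x-xi0) + Rabs (t-t0)*Rabs (x-xi0)^2 + Rabs (t-t0)*Rabs (x-xi0)^3 + Rabs (x-xi0)^4)).
  { intros t x Ht Hx. destruct (ET t Ht) as (A0 & A1 & A2 & A3). destruct (EX t x Ht Hx) as (B0 & B1 & B2).
    apply (R_U M a b (t-t0) (x-xi0) (D [] t x) (D [] t xi0) (D [false] t xi0) (D [false;false] t xi0) (D [false;false;false] t xi0)); auto. }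
  assert (FU1 : forall t x, Rabs (t-t0) < rho -> Rabs (x-xi0) < rho ->
    Rabs (D [false] t x - (a*(t-t0) + a*(x-xi0)^2/2)) <=
    M*(Rabs (t-t0)^2 + Rabs (t-t0)*Rabs (x-xi0) + Rabs (t-t0)*Rabs (x-xi0)^2 + Rabs (x-xi0)^3)).
  { intros t x Ht Hx. destruct (ET t Ht) as (A0 & A1 & A2 & A3). destruct (EX t x Ht Hx) as (B0 & B1 & B2).
    apply (R_U1 M a (t-t0) (x-xi0) (D [false] t x) (D [false] t xi0) (D [false;false] t xi0) (D [false;false;false] t xi0)); auto. }
  assert (FU1' : forall t x, Rabs (t-t0) < rho -> Rabs (x-xi0) < rho ->
    Rabs (D [false] t x - a*(t-t0)) <= M*(Rabs (t-t0)^2 + Rabs (t-t0)*Rabs (x-xi0) + Rabs (x-xi0)^2)).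
  { intros t x Ht Hx. destruct (ET t Ht) as (A0 & A1 & A2 & A3). destruct (EX t x Ht Hx) as (B0 & B1 & B2).
    apply (R_U1' M a (t-t0) (x-xi0) (D [false] t x) (D [false] t xi0) (D [false;false] t xi0)); auto. }
  assert (Hcont : forall t, Rabs (t-t0) < rho -> continuity (fun y => D [] t y)).
  { intros t Ht y. apply isd_cont with (D [false] t y). apply HDx; auto. }
  set (P := Rabs b / (2*a) + 1).
  set (E1 := Rabs b + 341*M). set (K := 2*(E1+1)/a).
  set (E2 := a*P^3 + M*(1+P+P^2+P^3+P^4)). set (L := (E2+1)/a).
  set (eps := Rmin rho (a/(8*(M+1)))).
  set (th := Rmin 1 (Rmin (1/(K+1)) (Rmin (1/(P+1)) (eps/8)))).
  set (delta := Rmin (rho/2) (Rmin (th*th) (Rmin (1/(L+1)) (Rmin (eps/(P+1)) (Rmin (a/(8*(M+1))) (a*a/(8*M*M+1))))))).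
  set (C := K + L + (85*M + 4*a*K) + M*(1+P+P^2)).
  assert (HP : 1 <= P) by (unfold P; assert (0 <= Rabs b / (2*a)) by (apply Rdiv_le_0_compat; [apply Rabs_pos|lra]); lra).
  assert (HE1 : 0 <= E1) by (unfold E1; pose proof (Rabs_pos b); lra).
  assert (HK : 0 < K) by (unfold K; apply Rdiv_lt_0_compat; lra).
  assert (HE2 : 0 <= E2) by (unfold E2; assert (0 <= P^3) by (apply pow_le; lra); assert (0 <= P^2) by (apply pow_le; lra);
     assert (0 <= P^4) by (apply pow_le; lra); assert (0 <= a*P^3) by nra; assert (0 <= M*(1+P+P^2+P^3+P^4)) by (apply Rmult_le_pos; lra); lra).
  assert (HL : 0 < L) by (unfold L; apply Rdiv_lt_0_compat; lra).
  assert (Heps : 0 < eps) by (unfold eps; apply Rmin_pos; [lra| apply Rdiv_lt_0_compat; lra]).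
  assert (Heps_r : eps <= rho) by apply Rmin_l.
  assert (Heps_a : eps <= a/(8*(M+1))) by apply Rmin_r.
  assert (Hth : 0 < th) by (unfold th; repeat apply Rmin_pos; try apply Rdiv_lt_0_compat; lra).
  assert (Hdelta : 0 < delta) by (unfold delta; repeat apply Rmin_pos; try apply Rdiv_lt_0_compat; try nra).
  assert (HC : 0 <= C) by (unfold C; assert (0 <= M*(1+P+P^2)) by (apply Rmult_le_pos; nra); nra).
  assert (Dl : delta <= rho/2 /\ delta <= th*th /\ delta <= 1/(L+1) /\ delta <= eps/(P+1) /\
     delta <= a/(8*(M+1)) /\ delta <= a*a/(8*M*M+1)).
  { unfold delta. repeat split;
      repeat (apply Rmin_l || (eapply Rle_trans; [apply Rmin_r|])); apply Rle_refl. }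
  assert (Tl : th <= 1 /\ th <= 1/(K+1) /\ th <= 1/(P+1) /\ th <= eps/8).
  { unfold th. repeat split;
      repeat (apply Rmin_l || (eapply Rle_trans; [apply Rmin_r|])); apply Rle_refl. }
  assert (Fq : forall q, 0 <= q < delta -> q < rho/2 /\ q < th*th /\ L*q < 1 /\ P*q < eps /\
      8*M*q < a /\ 8*M^2*q <= a^2 /\ q <= 1).
  { intros q Hq. destruct Dl as (D1 & D2 & D3 & D4 & D5 & D6).
    assert (q * (L+1) < 1) by (apply lt_div_mul; lra).
    assert (q * (P+1) < eps) by (apply lt_div_mul; lra).
    assert (q * (8*(M+1)) < a) by (apply lt_div_mul; lra).
    assert (q * (8*M*M+1) < a*a) by (apply lt_div_mul; nra).
    assert (th*th <= 1) by nra.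
    repeat split; nra. }
  assert (Fs : forall s, 0 < s < delta -> 0 < sqrt s /\ sqrt s * sqrt s = s /\ sqrt s <= 1 /\
      K * sqrt s <= 1 /\ P * sqrt s < 1 /\ 8 * sqrt s < eps).
  { intros s Hs. assert (Hst : sqrt s < th).
    { rewrite <- (sqrt_square th) by lra. apply sqrt_lt_1_alt. destruct Dl as (_ & D2 & _). lra. }
    assert (0 < sqrt s) by (apply sqrt_lt_R0; lra).
    destruct Tl as (T1 & T2 & T3 & T4).
    assert (sqrt s * (K+1) < 1) by (apply lt_div_mul; lra).
    assert (sqrt s * (P+1) < 1) by (apply lt_div_mul; lra).
    repeat split; try nra. apply sqrt_sqrt; lra. }
  assert (Four : forall t x1 x2 x3 x4, Rabs (t-t0) < rho -> x1 < x2 -> x2 < x3 -> x3 < x4 ->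
     Rabs (x1 - xi0) < eps -> Rabs (x4 - xi0) < eps ->
     D [] t x1 = 0 -> D [] t x2 = 0 -> D [] t x3 = 0 -> D [] t x4 = 0 -> False).
  { intros t x1 x2 x3 x4 Ht L12 L23 L34 A1 A4 Z1 Z2 Z3 Z4.
    assert (Dw : forall w y, is_derive (fun y => D w t y) y (D (false :: w) t y)) by (intros; apply HDx; auto).
    destruct (rolle' (fun y => D [] t y) (fun y => D [false] t y) x1 x2) as [y1 [Hy1 Ey1]]; auto. congruence.
    destruct (rolle' (fun y => D [] t y) (fun y => D [false] t y) x2 x3) as [y2 [Hy2 Ey2]]; auto. congruence.
    destruct (rolle' (fun y => D [] t y) (fun y => D [false] t y) x3 x4) as [y3 [Hy3 Ey3]]; auto. congruence.
    destruct (rolle' (fun y => D [false] t y) (fun y => D [false;false] t y) y1 y2) as [z1 [Hz1 Ez1]]; auto. lra. congruence.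
    destruct (rolle' (fun y => D [false] t y) (fun y => D [false;false] t y) y2 y3) as [z2 [Hz2 Ez2]]; auto. lra. congruence.
    destruct (rolle' (fun y => D [false;false] t y) (fun y => D [false;false;false] t y) z1 z2) as [w [Hw Ew]]; auto. lra. congruence.
    assert (Aw : Rabs (w - xi0) < eps) by (apply (between_abs xi0 eps x1 x4 w); auto; lra).
    destruct (Hb t w Ht ltac:(lra)) as (_ & _ & Hp & _). lra. }
  assert (Exm : forall t, exists x, Rabs (t - t0) < delta ->
     D [] t x = 0 /\ Rabs (x - xi0 - b/(2*a)*(t0-t)) <= L*(t-t0)^2).
  { intro t. destruct (Req_dec t t0) as [Et|Ne].
    { subst t. exists xi0. intros _. split; auto.
      replace (xi0 - xi0 - b/(2*a)*(t0-t0)) with 0 by (field; lra). rewrite Rabs_R0.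
      replace ((t0-t0)^2) with 0 by ring. lra. }
    destruct (Rlt_dec (Rabs (t-t0)) delta) as [Hd|Hd]; [|exists xi0; intro; contradiction].
    set (q := Rabs (t-t0)).
    assert (Hq : 0 < q) by (apply Rabs_pos_lt; lra).
    destruct (Fq q (conj (Rlt_le _ _ Hq) Hd)) as (Q1 & Q2 & Q3 & Q4 & Q5 & Q6 & Q7).
    assert (Htr : Rabs (t - t0) < rho) by (fold q; lra).
    set (Xs := b/(2*a)*(t0-t)). set (h := L*(t-t0)^2).
    assert (Hh : h = L*q^2) by (unfold h, q; rewrite pow2_abs; reflexivity).
    assert (Hh0 : 0 <= h) by (rewrite Hh; nra).
    assert (Hhq : h <= q) by (rewrite Hh; nra).
    assert (HXs : Rabs Xs = Rabs b/(2*a) * q).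
    { unfold Xs, q. unfold Rdiv. rewrite !Rabs_mult, Rabs_inv, (Rabs_pos_eq (2*a)) by lra.
      rewrite (Rabs_minus_sym t0 t). reflexivity. }
    assert (Bnd : forall X, Rabs (X - Xs) <= h -> Rabs X <= P*q).
    { intros X HX. replace X with (Xs + (X - Xs)) by ring.
      eapply Rle_trans; [apply Rabs_triang|]. unfold P. rewrite HXs. nra. }
    assert (Val : forall X, Rabs X <= P*q ->
        Rabs (D [] t (xi0 + X) - (b*(t-t0)^2/2 + a*(t-t0)*X)) <= E2*q^3).
    { intros X HX. assert (HXr : Rabs (xi0 + X - xi0) < rho) by (replace (xi0 + X - xi0) with X by ring; lra).
      pose proof (FU t (xi0+X) Htr HXr) as F. replace (xi0 + X - xi0) with X in F by ring.
      apply (mid_val a b M P q (t-t0) X); auto; lra. }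
    assert (Main : forall sg, b*(t-t0)^2/2 + a*(t-t0)*(Xs + sg*h) = sg*(a*(t-t0)*h))
      by (intros; unfold Xs; field; lra).
    set (A := a*(t-t0)*h).
    assert (HA : Rabs A = (E2+1)*q^3).
    { unfold A. rewrite !Rabs_mult, (Rabs_pos_eq a), (Rabs_pos_eq h) by lra. fold q. rewrite Hh.
      unfold L. field. lra. }
    assert (Hq3 : 0 < q^3) by (apply pow_lt; lra).
    set (pm := xi0 + (Xs + -1*h)). set (pp := xi0 + (Xs + 1*h)).
    assert (Vp : Rabs (D [] t pp - A) < (E2+1)*q^3).
    { pose proof (Val (Xs + 1*h) (Bnd _ ltac:(replace (Xs + 1*h - Xs) with h by ring; rewrite Rabs_pos_eq; lra))) as V.
      rewrite Main in V.
      replace (D [] t pp - A) with (D [] t (xi0 + (Xs + 1 * h)) - 1 * (a * (t - t0) * h)) by (unfold pp, A; ring). lra. }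
    assert (Vm : Rabs (D [] t pm + A) < (E2+1)*q^3).
    { pose proof (Val (Xs + -1*h) (Bnd _ ltac:(replace (Xs + -1*h - Xs) with (-h) by ring; rewrite Rabs_Ropp, Rabs_pos_eq; lra))) as V.
      rewrite Main in V.
      replace (D [] t pm + A) with (D [] t (xi0 + (Xs + -1 * h)) - -1 * (a * (t - t0) * h)) by (unfold pm, A; ring). lra. }
    pose proof (opp_sign A (D [] t pp - A) (D [] t pm + A) ((E2+1)*q^3) Vp Vm HA) as Op.
    replace ((-A + (D [] t pm + A)) * (A + (D [] t pp - A))) with (D [] t pm * D [] t pp) in Op by ring.
    destruct (IVT_cor (fun y => D [] t y) pm pp (Hcont t Htr)) as [z [Hz Ez]]; [unfold pm, pp; lra| exact Op |].
    exists z. intros _. split; auto. fold Xs. fold h.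
    unfold pm, pp in Hz. unfold Rabs; destruct Rcase_abs; lra. }
  assert (S6 : sqrt 6 * sqrt 6 = 6 /\ 2 <= sqrt 6 <= 3).
  { assert (E6 : sqrt 6 * sqrt 6 = 6) by (apply sqrt_sqrt; lra). pose proof (sqrt_pos 6). split; auto; split; nra. }
  assert (Exo : forall e, (e = 1 \/ e = -1) -> forall t, exists x, t0 - delta < t < t0 ->
     D [] t x = 0 /\ Rabs (x - xi0 - e * sqrt (6*(t0-t))) <= K*(t0-t)).
  { intros e He t.
    destruct (Rlt_dec (t0 - delta) t) as [Hl|Hl]; [|exists xi0; intros; lra].
    destruct (Rlt_dec t t0) as [Hu|Hu]; [|exists xi0; intros; lra].
    set (s := t0 - t).
    assert (Hs : 0 < s < delta) by (unfold s; lra).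
    destruct (Fs s Hs) as (Z1 & Z2 & Z3 & Z4 & Z5 & Z6).
    destruct (Fq s (conj (Rlt_le _ _ (proj1 Hs)) (proj2 Hs))) as (Q1 & Q2 & Q3 & Q4 & Q5 & Q6 & Q7).
    set (sg := sqrt s) in *.
    set (r := sqrt (6*s)).
    assert (Hr6 : r = sqrt 6 * sg) by (unfold r, sg; apply sqrt_mult; lra).
    destruct S6 as (E6 & S6a & S6b).
    assert (Hr2 : r^2 = 6*sg^2) by (rewrite Hr6; replace ((sqrt 6 * sg)^2) with ((sqrt 6 * sqrt 6) * sg^2) by ring; rewrite E6; ring).
    assert (Hr23 : 2*sg <= r <= 3*sg) by (rewrite Hr6; split; nra).
    set (k := K*s).
    assert (Hk : k = K*sg^2) by (unfold k; rewrite <- Z2; ring).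
    assert (Hk0 : 0 < k) by (unfold k; nra).
    assert (Hks : k <= sg) by (rewrite Hk; nra).
    assert (Htr : Rabs (t - t0) < rho) by (rewrite Rabs_minus_sym; fold s; rewrite Rabs_pos_eq; lra).
    assert (Hsg1 : 0 < sg <= 1) by lra.
    assert (Val : forall k', Rabs k' <= sg ->
       Rabs (D [] t (xi0 + (e*r + k')) - a*(e*r+k')*((e*r+k')^2 - r^2)/6) <= E1*sg^4).
    { intros k' Hk'.
      assert (HX : Rabs (e*r + k') <= 4*sg).
      { eapply Rle_trans; [apply Rabs_triang|]. rewrite Rabs_mult.
        assert (He1 : Rabs e = 1) by (destruct He as [-> | ->]; unfold Rabs; destruct Rcase_abs; lra).
        rewrite He1, (Rabs_pos_eq r) by lra. lra. }
      assert (HXr : Rabs (xi0 + (e*r + k') - xi0) < rho) by (replace (xi0 + (e*r + k') - xi0) with (e*r+k') by ring; lra).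
      pose proof (FU t (xi0 + (e*r+k')) Htr HXr) as F.
      replace (xi0 + (e*r + k') - xi0) with (e*r+k') in F by ring.
      apply (outer_val a b M sg r (e*r+k') (t-t0)); auto.
      replace (t - t0) with (-s) by (unfold s; ring). rewrite <- Z2. ring. }
    assert (Mid : forall k', (e*r+k')*((e*r+k')^2 - r^2) = (r + e*k')*(2*r + e*k')*k')
      by (intros; destruct He as [-> | ->]; ring).
    assert (Hek2 : -k <= e*k <= k) by (destruct He as [-> | ->]; lra).
    assert (Mp : a*sg^2*k/2 <= a*(e*r+k)*((e*r+k)^2 - r^2)/6).
    { replace (a*(e*r+k)*((e*r+k)^2 - r^2)/6) with (a*((r + e*k)*(2*r + e*k)*k)/6) by (rewrite <- Mid; field).
      apply main_ge; lra. }
    assert (Mm : a*(e*r+-k)*((e*r+-k)^2 - r^2)/6 <= a*sg^2*(-k)/2).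
    { replace (a*(e*r+-k)*((e*r+-k)^2 - r^2)/6) with (a*((r + e*-k)*(2*r + e*-k)*(-k))/6) by (rewrite <- Mid; field).
      apply main_le; lra. }
    assert (Ek : a*sg^2*k/2 = (E1+1)*sg^4) by (rewrite Hk; unfold K; field; lra).
    assert (Hsg4 : 0 < sg^4) by (apply pow_lt; lra).
    pose proof (Val k ltac:(rewrite Rabs_pos_eq; lra)) as Vp.
    pose proof (Val (-k) ltac:(rewrite Rabs_Ropp, Rabs_pos_eq; lra)) as Vm.
    apply abs_le_elim in Vp. apply abs_le_elim in Vm.
    assert (Pp : 0 < D [] t (xi0 + (e*r + k))) by lra.
    assert (Pm : D [] t (xi0 + (e*r + -k)) < 0) by lra.
    destruct (IVT_cor (fun y => D [] t y) (xi0 + (e*r + -k)) (xi0 + (e*r + k)) (Hcont t Htr)) as [z [Hz Ez]];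
      [lra| nra |].
    exists z. intros _. split; auto. fold s. fold r. fold k.
    unfold Rabs; destruct Rcase_abs; lra. }
  assert (Geo : forall t, t0 - delta < t < t0 ->
     0 < sqrt (t0-t) <= 1 /\ sqrt (t0-t) * sqrt (t0-t) = t0-t /\ K * sqrt (t0-t) <= 1 /\
     P * sqrt (t0-t) < 1 /\ 8 * sqrt (t0-t) < eps /\ sqrt (6*(t0-t)) ^2 = 6 * sqrt (t0-t) ^2 /\
     2 * sqrt (t0-t) <= sqrt (6*(t0-t)) <= 3 * sqrt (t0-t) /\ Rabs (t-t0) < rho /\ 0 < t0 - t < delta).
  { intros t Ht. assert (Hs : 0 < t0 - t < delta) by lra.
    destruct (Fs _ Hs) as (Z1 & Z2 & Z3 & Z4 & Z5 & Z6).
    assert (Hr6 : sqrt (6*(t0-t)) = sqrt 6 * sqrt (t0-t)) by (apply sqrt_mult; lra).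
    destruct S6 as (E6 & S6a & S6b).
    assert (Htr : Rabs (t - t0) < rho) by (rewrite Rabs_minus_sym; rewrite Rabs_pos_eq; lra).
    repeat split; auto; try lra; rewrite Hr6; try nra;
    replace ((sqrt 6 * sqrt (t0 - t))^2) with ((sqrt 6 * sqrt 6) * sqrt (t0-t)^2) by ring; rewrite E6; ring. }
  assert (MidB : forall t x, Rabs (t - t0) < delta -> Rabs (x - xi0 - b/(2*a)*(t0-t)) <= L*(t-t0)^2 ->
     Rabs (x - xi0) <= P * Rabs (t-t0) /\ P * Rabs (t-t0) < eps).
  { intros t x Ht Hx. set (q := Rabs (t-t0)) in *.
    destruct (Fq q (conj (Rabs_pos _) Ht)) as (Q1 & Q2 & Q3 & Q4 & Q5 & Q6 & Q7).
    split; auto.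
    assert (Hh : L*(t-t0)^2 = L*q^2) by (unfold q; rewrite pow2_abs; reflexivity).
    assert (HXs : Rabs (b/(2*a)*(t0-t)) = Rabs b/(2*a) * q).
    { unfold q. unfold Rdiv. rewrite !Rabs_mult, Rabs_inv, (Rabs_pos_eq (2*a)) by lra.
      rewrite (Rabs_minus_sym t0 t). reflexivity. }
    replace (x - xi0) with (b/(2*a)*(t0-t) + (x - xi0 - b/(2*a)*(t0-t))) by ring.
    eapply Rle_trans; [apply Rabs_triang|]. rewrite HXs. unfold P.
    assert (0 <= q) by apply Rabs_pos. nra. }
  set (xi := fun t => proj1_sig (constructive_indefinite_description _ (Exm t))).
  assert (Pxi : forall t, Rabs (t - t0) < delta -> D [] t (xi t) = 0 /\ Rabs (xi t - xi0 - b/(2*a)*(t0-t)) <= L*(t-t0)^2)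
    by (intro t; exact (proj2_sig (constructive_indefinite_description _ (Exm t)))).
  set (xi1 := fun t => proj1_sig (constructive_indefinite_description _ (Exo 1 (or_introl eq_refl) t))).
  assert (Pxi1 : forall t, t0 - delta < t < t0 -> D [] t (xi1 t) = 0 /\ Rabs (xi1 t - xi0 - 1 * sqrt (6*(t0-t))) <= K*(t0-t))
    by (intro t; exact (proj2_sig (constructive_indefinite_description _ (Exo 1 (or_introl eq_refl) t)))).
  set (xi2 := fun t => proj1_sig (constructive_indefinite_description _ (Exo (-1) (or_intror eq_refl) t))).
  assert (Pxi2 : forall t, t0 - delta < t < t0 -> D [] t (xi2 t) = 0 /\ Rabs (xi2 t - xi0 - -1 * sqrt (6*(t0-t))) <= K*(t0-t))
    by (intro t; exact (proj2_sig (constructive_indefinite_description _ (Exo (-1) (or_intror eq_refl) t)))).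
  clearbody xi xi1 xi2.
  assert (CK : K <= C) by (unfold C; assert (0 <= M*(1+P+P^2)) by (apply Rmult_le_pos; nra); nra).
  assert (CL : L <= C) by (unfold C; assert (0 <= M*(1+P+P^2)) by (apply Rmult_le_pos; nra); nra).
  assert (CO : 85*M + 4*a*K <= C) by (unfold C; assert (0 <= M*(1+P+P^2)) by (apply Rmult_le_pos; nra); nra).
  assert (CM : M*(1+P+P^2) <= C) by (unfold C; nra).
  assert (Hdr : delta <= rho/2) by apply Dl.
  exists delta, eps, C, xi1, xi2, xi.
  split; [lra|]. split; [lra|]. split; [lra|]. split; [lra|].
  split; [|split; [|split]].
  -
    intros t Ht. destruct (Geo t Ht) as (G1 & G2 & G3 & G4 & G5 & G6 & G7 & G8 & G9).
    destruct (Pxi1 t Ht) as [R1 B1]. destruct (Pxi2 t Ht) as [R2 B2].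
    set (sg := sqrt (t0-t)) in *. set (r := sqrt (6*(t0-t))) in *.
    assert (Htd : Rabs (t - t0) < delta) by (rewrite Rabs_minus_sym, Rabs_pos_eq; lra).
    destruct (Pxi t Htd) as [Rm Bm]. destruct (MidB t (xi t) Htd Bm) as [Mb Me].
    rewrite (Rabs_minus_sym t t0), (Rabs_pos_eq (t0-t)) in Mb by lra.
    assert (Pss : P*(t0-t) < sg) by (rewrite <- G2; nra).
    assert (Kss : K*(t0-t) <= sg) by (rewrite <- G2; nra).
    apply abs_le_elim in Mb. apply abs_le_elim in B1. apply abs_le_elim in B2.
    assert (O1 : xi t < xi1 t) by lra. assert (O2 : xi2 t < xi t) by lra.
    assert (A1 : Rabs (xi1 t - xi0) < eps) by (apply abs_lt_intro; lra).
    assert (A2 : Rabs (xi2 t - xi0) < eps) by (apply abs_lt_intro; lra).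
    assert (Am : Rabs (xi t - xi0) < eps) by (apply abs_lt_intro; lra).
    split; [lra|]. split; [lra|]. split; [lra|].
    intro x. split.
    + intros [Hx Rx].
      destruct (Rtotal_order x (xi2 t)) as [C1|[C1|C1]].
      * exfalso. apply (Four t x (xi2 t) (xi t) (xi1 t)); auto.
      * right; left; auto.
      * destruct (Rtotal_order x (xi t)) as [C2|[C2|C2]].
        -- exfalso. apply (Four t (xi2 t) x (xi t) (xi1 t)); auto.
        -- right; right; auto.
        -- destruct (Rtotal_order x (xi1 t)) as [C3|[C3|C3]].
           ++ exfalso. apply (Four t (xi2 t) (xi t) x (xi1 t)); auto.
           ++ left; auto.
           ++ exfalso. apply (Four t (xi2 t) (xi t) (xi1 t) x); auto.
    + intros [ -> | [ -> | -> ] ]; auto.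
  -
    intros t Ht x.
    assert (Htd : Rabs (t - t0) < delta) by (rewrite Rabs_pos_eq; lra).
    destruct (Pxi t Htd) as [Rm Bm]. destruct (MidB t (xi t) Htd Bm) as [Mb Me].
    assert (Am : Rabs (xi t - xi0) < eps) by lra.
    split.
    + intros [Hx Rx]. destruct (Req_dec x (xi t)) as [E|Ne]; auto. exfalso.
      set (q := Rabs (t-t0)) in *.
      destruct (Fq q (conj (Rabs_pos _) Htd)) as (Q1 & Q2 & Q3 & Q4 & Q5 & Q6 & Q7).
      assert (Hq : q = t - t0) by (unfold q; apply Rabs_pos_eq; lra).
      assert (Pos : forall z, Rabs (z - xi0) < eps -> 5*a*(t-t0)/8 + a*(z-xi0)^2/8 <= D [false] t z).
      { intros z Hz. apply (pos_lemma a M (t-t0) (z-xi0)); auto; try lra.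
        - rewrite <- Hq; lra.
        - rewrite <- Hq; lra.
        - assert (Rabs (z - xi0) * (8*(M+1)) < a) by (apply lt_div_mul; lra).
          assert (0 <= Rabs (z - xi0)) by apply Rabs_pos. nra.
        - apply FU1; [unfold q in *; lra | lra]. }
      assert (Dw : forall w y, is_derive (fun y => D w t y) y (D (false :: w) t y)) by (intros; apply HDx; unfold q in *; lra).
      assert (Gen : forall x1 x2, x1 < x2 -> Rabs (x1 - xi0) < eps -> Rabs (x2 - xi0) < eps ->
                D [] t x1 = 0 -> D [] t x2 = 0 -> t = t0 /\ exists z, x1 < z < x2 /\ z = xi0).
      { intros x1 x2 L12 A1 A2 Z1 Z2.
        destruct (rolle' (fun y => D [] t y) (fun y => D [false] t y) x1 x2) as [z [Hz Ez]]; auto. congruence.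
        assert (Az : Rabs (z - xi0) < eps) by (apply (between_abs xi0 eps x1 x2 z); auto; lra).
        pose proof (Pos z Az) as Pz. rewrite Ez in Pz.
        assert (0 <= (z-xi0)^2) by apply pow2_ge_0.
        assert (Tq : t = t0) by nra. split; auto.
        exists z. split; auto. assert (Hz0 : (z-xi0)^2 = 0) by nra. assert (Hzz : (z-xi0)*(z-xi0) = 0) by (rewrite <- Hz0; ring). apply Rmult_integral in Hzz. destruct Hzz; lra. }
      assert (Ht0 : t = t0 -> xi t = xi0).
      { intro E. subst t. replace (xi t0 - xi0 - b/(2*a)*(t0-t0)) with (xi t0 - xi0) in Bm by (field; lra).
        replace (L*(t0-t0)^2) with 0 in Bm by ring. apply abs_le_elim in Bm. lra. }
      destruct (Rtotal_order x (xi t)) as [C1|[C1|C1]].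
      * destruct (Gen x (xi t)) as [Tt [z [Hz Ez]]]; auto. rewrite (Ht0 Tt) in Hz. lra.
      * auto.
      * destruct (Gen (xi t) x) as [Tt [z [Hz Ez]]]; auto. rewrite (Ht0 Tt) in Hz. lra.
    + intros ->. auto.
  -
    intros t Ht. destruct (Geo t Ht) as (G1 & G2 & G3 & G4 & G5 & G6 & G7 & G8 & G9).
    destruct (Pxi1 t Ht) as [R1 B1]. destruct (Pxi2 t Ht) as [R2 B2].
    set (sg := sqrt (t0-t)) in *. set (r := sqrt (6*(t0-t))) in *.
    assert (Hs2 : sg^2 = t0 - t) by (rewrite <- G2; ring).
    assert (Kss : K*(t0-t) <= sg) by (rewrite <- G2; nra).
    assert (HCs : K*(t0-t) <= C*(t0-t)) by (apply Rmult_le_compat_r; lra).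
    assert (Hsss : 0 <= (t0-t)*sg) by (apply Rmult_le_pos; lra).
    assert (Eq1 : (t0-t)*sg = sg^2*sg) by (rewrite Hs2; ring).
    assert (A1 : Rabs (xi1 t - xi0) < rho).
    { apply abs_le_elim in B1. apply abs_lt_intro. lra. }
    assert (A2 : Rabs (xi2 t - xi0) < rho).
    { apply abs_le_elim in B2. apply abs_lt_intro. lra. }
    split; [|split; [|split]].
    + rewrite Rmult_1_l in B1. lra.
    + replace (xi2 t - xi0 + r) with (xi2 t - xi0 - -1*r) by ring. lra.
    + pose proof (FU1 t (xi1 t) G8 A1) as F.
      assert (O := outer_ux a M K sg r (xi1 t - xi0 - r) (xi1 t - xi0) (t-t0) (D [false] t (xi1 t))
        Ha HM (Rlt_le _ _ HK) G1 G6 ltac:(lra) ltac:(rewrite Hs2; ring)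
        ltac:(rewrite Hs2; rewrite Rmult_1_l in B1; exact B1) G3 ltac:(left; ring) F).
      rewrite Hs2 in O.
      apply Rle_trans with ((85*M + 4*a*K) * ((t0-t)*sg)); [exact O|].
      apply Rmult_le_compat_r; auto.
    + pose proof (FU1 t (xi2 t) G8 A2) as F.
      assert (O := outer_ux a M K sg r (xi2 t - xi0 + r) (xi2 t - xi0) (t-t0) (D [false] t (xi2 t))
        Ha HM (Rlt_le _ _ HK) G1 G6 ltac:(lra) ltac:(rewrite Hs2; ring)
        ltac:(rewrite Hs2; replace (xi2 t - xi0 + r) with (xi2 t - xi0 - -1*r) by ring; exact B2) G3 ltac:(right; ring) F).
      rewrite Hs2 in O.
      apply Rle_trans with ((85*M + 4*a*K) * ((t0-t)*sg)); [exact O|].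
      apply Rmult_le_compat_r; auto.
  -
    intros t Htd.
    destruct (Pxi t Htd) as [Rm Bm]. destruct (MidB t (xi t) Htd Bm) as [Mb Me].
    assert (E2t : (t - t0)^2 = (t0 - t)^2) by ring.
    assert (Htr : Rabs (t - t0) < rho) by lra.
    assert (Ar : Rabs (xi t - xi0) < rho) by lra.
    set (q := Rabs (t-t0)) in *.
    assert (Hq2 : q^2 = (t0-t)^2) by (unfold q; rewrite pow2_abs; ring).
    assert (0 <= q) by apply Rabs_pos.
    split.
    + rewrite E2t in Bm. apply Rle_trans with (L*(t0-t)^2); auto.
      apply Rmult_le_compat_r; [apply pow2_ge_0| lra].
    + pose proof (FU1' t (xi t) Htr Ar) as F. fold q in F.
      set (Y := Rabs (xi t - xi0)) in *. assert (0 <= Y) by apply Rabs_pos.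
      assert (q*Y <= P*q^2) by nra. assert (Y^2 <= P^2*q^2) by nra.
      apply Rle_trans with (M*(q^2 + q*Y + Y^2)); auto.
      rewrite <- Hq2. apply Rle_trans with ((M*(1+P+P^2))*q^2).
      * replace ((M*(1+P+P^2))*q^2) with (M*(q^2 + P*q^2 + P^2*q^2)) by ring.
        apply Rmult_le_compat_l; lra.
      * apply Rmult_le_compat_r; [apply pow2_ge_0| lra].
Qed.

Lemma box_bound (g : R -> R -> R) t0 x0 : continuous (fun p : R * R => g (fst p) (snd p)) (t0,x0) ->
  exists e, 0 < e /\ forall t x, Rabs (t-t0) < e -> Rabs (x-x0) < e -> Rabs (g t x) <= Rabs (g t0 x0) + 1.
Proof.
  intros H. destruct (cont_box g t0 x0 H 1 Rlt_0_1) as [e [He Hb]]. exists e. split; auto.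
  intros t x Ht Hx. specialize (Hb t x Ht Hx).
  replace (g t x) with (g t0 x0 + (g t x - g t0 x0)) by ring.
  eapply Rle_trans; [apply Rabs_triang|]. lra.
Qed.

Lemma isd_of (u : R -> R -> R) (Hu : smooth_halfplane u) w t x : 0 < t ->
  is_derive (fun y => pderiv w u t y) x (pderiv (false :: w) u t x) /\
  is_derive (fun s => pderiv w u s x) t (pderiv (true :: w) u t x).
Proof.
  intros Ht. destruct (Hu w t x Ht) as (H1 & H2 & _). split.
  - apply Derive_correct. exact H2.
  - apply Derive_correct. exact H1.
Qed.

Theorem proposition4p2
  (f u0 : R -> R) (u : R -> R -> R) (t0 xi0 : R)
  (Hf : smooth1 f) (Hf0 : Derive f 0 = 0)
  (Hu0 : smooth_bounded u0)
  (Hu : smooth_halfplane u)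
  (Hpde : forall t x, 0 < t ->
     partial_t u t x = partial_x (partial_x u) t x + Derive f (u t x) * partial_x u t x)
  (Hinit : forall x, filterlim (fun t => u t x) (at_right 0) (locally (u0 x)))
  (Ht0 : 0 < t0)
  (Hz0 : u t0 xi0 = 0)
  (Hz1 : partial_x u t0 xi0 = 0)
  (Hz2 : partial_x (partial_x u) t0 xi0 = 0)
  (Hz3 : partial_x (partial_x (partial_x u)) t0 xi0 <> 0) :
  let a := partial_x (partial_x (partial_x u)) t0 xi0 in
  let b := partial_t (partial_t u) t0 xi0 in
  exists (delta eps C : R) (xi1 xi2 xi : R -> R),
    0 < delta /\ delta < t0 /\ 0 < eps /\ 0 <= C /\
    (forall t, t0 - delta < t < t0 ->
       xi1 t <> xi2 t /\ xi1 t <> xi t /\ xi2 t <> xi t /\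
       forall x, (Rabs (x - xi0) < eps /\ u t x = 0) <->
                 (x = xi1 t \/ x = xi2 t \/ x = xi t)) /\
    (forall t, t0 <= t < t0 + delta ->
       forall x, (Rabs (x - xi0) < eps /\ u t x = 0) <-> x = xi t) /\
    (forall t, t0 - delta < t < t0 ->
       Rabs (xi1 t - xi0 - sqrt (6 * (t0 - t))) <= C * (t0 - t) /\
       Rabs (xi2 t - xi0 + sqrt (6 * (t0 - t))) <= C * (t0 - t) /\
       Rabs (partial_x u t (xi1 t) - 2 * a * (t0 - t))
         <= C * ((t0 - t) * sqrt (t0 - t)) /\
       Rabs (partial_x u t (xi2 t) - 2 * a * (t0 - t))
         <= C * ((t0 - t) * sqrt (t0 - t))) /\
    (forall t, Rabs (t - t0) < delta ->
       Rabs (xi t - xi0 - b / (2 * a) * (t0 - t)) <= C * (t0 - t) ^ 2 /\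
       Rabs (partial_x u t (xi t) - a * (t - t0)) <= C * (t0 - t) ^ 2).
Proof.
  intros a b.
  assert (Vt : pderiv [true] u t0 xi0 = 0).
  { simpl. rewrite Hpde by lra. rewrite Hz0, Hf0, Hz2. ring. }
  assert (Vtx : pderiv [true;false] u t0 xi0 = a).
  { assert (Sw : pderiv [true;false] u t0 xi0 = pderiv [false;true] u t0 xi0).
    { apply (Schwarz u t0 xi0).
      - exists (mkposreal t0 Ht0). intros s y Hs Hy. simpl in Hs.
        assert (Hs0 : 0 < s) by (apply abs_lt_elim in Hs; lra).
        destruct (Hu [] s y Hs0) as (A1 & A2 & _).
        destruct (Hu [false] s y Hs0) as (B1 & _ & _).
        destruct (Hu [true] s y Hs0) as (_ & C2 & _).
        repeat split; assumption.
      - apply continuity_2d_pt_filterlim. exact (proj2 (proj2 (Hu [true;false] t0 xi0 Ht0))).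
      - apply continuity_2d_pt_filterlim. exact (proj2 (proj2 (Hu [false;true] t0 xi0 Ht0))). }
    rewrite Sw. change (Derive (fun y => partial_t u t0 y) xi0 = a).
    rewrite (Derive_ext (fun y => partial_t u t0 y)
       (fun y => partial_x (partial_x u) t0 y + Derive f (u t0 y) * partial_x u t0 y))
      by (intro y; apply Hpde; lra).
    assert (Df : is_derive (Derive f) (u t0 xi0) (Derive (Derive f) (u t0 xi0))).
    { apply Derive_correct. exact (Hf 1%nat (u t0 xi0)). }
    destruct (isd_of u Hu [] t0 xi0 Ht0) as [Du _].
    destruct (isd_of u Hu [false] t0 xi0 Ht0) as [Dux _].
    destruct (isd_of u Hu [false;false] t0 xi0 Ht0) as [Duxx _].
    eassert (HD : is_derive (fun y => partial_x (partial_x u) t0 y + Derive f (u t0 y) * partial_x u t0 y) xi0 _).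
    { apply (is_derive_plus (fun y => partial_x (partial_x u) t0 y)); [exact Duxx|].
      apply (is_derive_mult (fun y => Derive f (u t0 y)) (fun y => partial_x u t0 y));
        [ apply (is_derive_comp (Derive f) (fun y => u t0 y)); [exact Df | exact Du] | exact Dux | intros; apply Rmult_comm]. }
    etransitivity; [apply (is_derive_unique _ _ _ HD)|].
    assert (Z1 : pderiv [false] u t0 xi0 = 0) by exact Hz1.
    assert (Z2 : pderiv [false;false] u t0 xi0 = 0) by exact Hz2.
    unfold plus, mult, scal; simpl. unfold mult; simpl.
    rewrite Hz1, Hz2. unfold a. ring. }
  assert (Ha0 : 0 < Rabs a) by (apply Rabs_pos_lt; exact Hz3).
  assert (Ct : forall w, continuous (fun p : R * R => pderiv w u (fst p) (snd p)) (t0, xi0))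
    by (intro w; exact (proj2 (proj2 (Hu w t0 xi0 Ht0)))).
  destruct (box_bound _ t0 xi0 (Ct [false;false;false;false])) as [e1 [He1 B1]].
  destruct (box_bound _ t0 xi0 (Ct [false;false;false])) as [e2 [He2 B2]].
  destruct (box_bound _ t0 xi0 (Ct [true;true;true])) as [e3 [He3 B3]].
  destruct (box_bound _ t0 xi0 (Ct [true;true;false])) as [e4 [He4 B4]].
  destruct (box_bound _ t0 xi0 (Ct [true;false;false])) as [e5 [He5 B5]].
  destruct (box_bound _ t0 xi0 (Ct [true;false;false;false])) as [e6 [He6 B6]].
  destruct (cont_box _ t0 xi0 (Ct [false;false;false]) (Rabs a / 2) ltac:(lra)) as [e7 [He7 B7]].
  set (rho := Rmin t0 (Rmin e1 (Rmin e2 (Rmin e3 (Rmin e4 (Rmin e5 (Rmin e6 e7))))))).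
  assert (Rl : rho <= t0 /\ rho <= e1 /\ rho <= e2 /\ rho <= e3 /\ rho <= e4 /\ rho <= e5 /\ rho <= e6 /\ rho <= e7).
  { unfold rho. repeat split;
      repeat (apply Rmin_l || (eapply Rle_trans; [apply Rmin_r|])); apply Rle_refl. }
  assert (Hrho : 0 < rho) by (unfold rho; repeat apply Rmin_pos; lra).
  set (M := (Rabs (pderiv [false;false;false;false] u t0 xi0) + 1) + (Rabs (pderiv [false;false;false] u t0 xi0) + 1)
          + (Rabs (pderiv [true;true;true] u t0 xi0) + 1) + (Rabs (pderiv [true;true;false] u t0 xi0) + 1)
          + (Rabs (pderiv [true;false;false] u t0 xi0) + 1) + (Rabs (pderiv [true;false;false;false] u t0 xi0) + 1)).
  assert (Pabs : forall w, 0 <= Rabs (pderiv w u t0 xi0) + 1) by (intro; pose proof (Rabs_pos (pderiv w u t0 xi0)); lra).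
  assert (HM : 0 <= M) by (unfold M; pose proof (Pabs [false;false;false;false]); pose proof (Pabs [false;false;false]);
     pose proof (Pabs [true;true;true]); pose proof (Pabs [true;true;false]); pose proof (Pabs [true;false;false]);
     pose proof (Pabs [true;false;false;false]); lra).
  assert (Bx : forall t x, Rabs (t-t0) < rho -> Rabs (x-xi0) < rho ->
     Rabs (pderiv [false;false;false;false] u t x) <= M /\ Rabs (pderiv [false;false;false] u t x) <= M /\
     Rabs (pderiv [false;false;false] u t x - a) < Rabs a / 2 /\
     Rabs (pderiv [true;true;true] u t x) <= M /\ Rabs (pderiv [true;true;false] u t x) <= M /\
     Rabs (pderiv [true;false;false] u t x) <= M /\ Rabs (pderiv [true;false;false;false] u t x) <= M).
  { intros t x Ht Hx. destruct Rl as (R0 & R1 & R2 & R3 & R4 & R5 & R6 & R7).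
    pose proof (Pabs [false;false;false;false]); pose proof (Pabs [false;false;false]);
     pose proof (Pabs [true;true;true]); pose proof (Pabs [true;true;false]); pose proof (Pabs [true;false;false]);
     pose proof (Pabs [true;false;false;false]).
    specialize (B1 t x ltac:(lra) ltac:(lra)). specialize (B2 t x ltac:(lra) ltac:(lra)).
    specialize (B3 t x ltac:(lra) ltac:(lra)). specialize (B4 t x ltac:(lra) ltac:(lra)).
    specialize (B5 t x ltac:(lra) ltac:(lra)). specialize (B6 t x ltac:(lra) ltac:(lra)).
    specialize (B7 t x ltac:(lra) ltac:(lra)).
    unfold M. repeat split; try lra. exact B7. }
  assert (Tpos : forall t, Rabs (t - t0) < rho -> 0 < t).
  { intros t Ht. apply abs_lt_elim in Ht. destruct Rl. lra. }
  destruct (Rlt_dec 0 a) as [Hpos|Hneg].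
  - assert (H : Hyp (fun w => pderiv w u) t0 xi0 rho M a b).
    { destruct Rl as (R0 & _).
      split; [lra|]. split; [lra|]. split; [lra|]. split; [lra|].
      split; [intros w t x Ht; apply (isd_of u Hu w t x (Tpos t Ht))|].
      split; [intros w t x Ht; apply (isd_of u Hu w t x (Tpos t Ht))|].
      split.
      { intros t x Ht Hx. destruct (Bx t x Ht Hx) as (X1 & X2 & X3 & X4 & X5 & X6 & X7).
        rewrite (Rabs_pos_eq a) in X3 by lra. apply abs_lt_elim in X3.
        repeat split; auto; lra. }
      repeat split; auto. }
    exact (core _ _ _ _ _ _ _ H).
  - assert (Hna : a < 0) by (destruct (Rtotal_order a 0) as [?|[?|?]]; auto; [exfalso; apply Hz3; auto| lra]).
    assert (H : Hyp (fun w t x => - pderiv w u t x) t0 xi0 rho M (-a) (-b)).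
    { destruct Rl as (R0 & _).
      split; [lra|]. split; [lra|]. split; [lra|]. split; [lra|].
      split; [intros w t x Ht; apply (is_derive_opp (fun y => pderiv w u t y)); apply (isd_of u Hu w t x (Tpos t Ht))|].
      split; [intros w t x Ht; apply (is_derive_opp (fun s => pderiv w u s x)); apply (isd_of u Hu w t x (Tpos t Ht))|].
      split.
      { intros t x Ht Hx. destruct (Bx t x Ht Hx) as (X1 & X2 & X3 & X4 & X5 & X6 & X7).
        rewrite (Rabs_left a) in X3 by lra. apply abs_lt_elim in X3.
        rewrite !Rabs_Ropp. repeat split; auto; lra. }
      cbv beta. assert (Z0 : pderiv [] u t0 xi0 = 0) by exact Hz0.
      assert (Z1 : pderiv [false] u t0 xi0 = 0) by exact Hz1.
      assert (Z2 : pderiv [false;false] u t0 xi0 = 0) by exact Hz2.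
      rewrite Z0, Z1, Z2, Vt, Vtx. repeat split; try ring. }
    destruct (core _ _ _ _ _ _ _ H) as (delta & eps & C & xi1 & xi2 & xi & P1 & P2 & P3 & P4 & PA & PB & PC & PD).
    cbv beta in PA, PB, PC, PD.
    assert (Neg0 : forall t x, - pderiv [] u t x = 0 <-> u t x = 0) by (intros; simpl; split; intros; lra).
    exists delta, eps, C, xi1, xi2, xi.
    split; [lra|]. split; [lra|]. split; [lra|]. split; [lra|].
    split; [|split; [|split]].
    + intros t Ht. destruct (PA t Ht) as (d1 & d2 & d3 & Hiff).
      split; [auto|]. split; [auto|]. split; [auto|]. intro x. split.
      * intros [Hx Rx]. apply Hiff. split; auto. apply Neg0; auto.
      * intros Hx. apply Hiff in Hx. destruct Hx as [Hx Rx]. apply Neg0 in Rx. auto.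
    + intros t Ht x. specialize (PB t Ht x). rewrite <- PB. split; intros [Hx Rx]; split; auto; apply Neg0; auto.
    + intros t Ht. destruct (PC t Ht) as (c1 & c2 & c3 & c4). repeat split; auto.
      * replace (partial_x u t (xi1 t) - 2 * a * (t0 - t)) with (-(- pderiv [false] u t (xi1 t) - 2 * - a * (t0 - t))) by (simpl; ring).
        rewrite Rabs_Ropp. exact c3.
      * replace (partial_x u t (xi2 t) - 2 * a * (t0 - t)) with (-(- pderiv [false] u t (xi2 t) - 2 * - a * (t0 - t))) by (simpl; ring).
        rewrite Rabs_Ropp. exact c4.
    + intros t Ht. destruct (PD t Ht) as (d1 & d2). split.
      * replace (b / (2*a)) with (-b / (2 * -a)) by (field; lra). exact d1.
      * replace (partial_x u t (xi t) - a * (t - t0)) with (-(- pderiv [false] u t (xi t) - - a * (t - t0))) by (simpl; ring).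
        rewrite Rabs_Ropp. exact d2.
Qed.
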